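(* Suppose $c_1\ge-1$, $c_2\ge-1$, $c_3>\bar c_3(c_1,c_2)$. Let $U^+$ be the real analytic solution, on some interval $(-1,-1+\delta)$, of $(1-x^2)U'+2xU+\frac12U^2=P_c(x)$ given by a power series $\tau_2(c_1)+\sum_{n\ge1}a_n(1+x)^n$ (so $U^+(-1)=\tau_2(c_1)$). Then $U^+$ extends to a solution of the equation in $(-1,1)$ and $U^+(1)=\tau_2'(c_2)$. Similarly, let $U^-$ be the real analytic solution on some interval $(1-\delta,1)$ given by a power series $\tau_1'(c_2)+\sum_{n\ge1}b_n(1-x)^n$ (so $U^-(1)=\tau_1'(c_2)$). Then $U^-$ extends to a solution in $(-1,1)$ and $U^-(-1)=\tau_1(c_1)$. Moreover $U^-<U^+$ in $(-1,1)$.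
   Context: $P_c(x):=c_1(1-x)+c_2(1+x)+c_3(1-x^2)$ for $c=(c_1,c_2,c_3)$; $\bar c_3(c_1,c_2):=-\frac12(\sqrt{1+c_1}+\sqrt{1+c_2})(\sqrt{1+c_1}+\sqrt{1+c_2}+2)$. $\tau_1(c_1):=2-2\sqrt{1+c_1}$, $\tau_2(c_1):=2+2\sqrt{1+c_1}$, $\tau_1'(c_2):=-2-2\sqrt{1+c_2}$, $\tau_2'(c_2):=-2+2\sqrt{1+c_2}$. For $c_1\ge-1$ there is a unique power-series (real analytic) local solution near $x=-1$ with value $\tau_2(c_1)$ at $-1$, and for $c_2\ge-1$ a unique one near $x=1$ with value $\tau_1'(c_2)$ at $1$. Boundary values $U(\pm1)$ denote one-sided limits. *)

(* Defs.v *)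
From Stdlib Require Import Reals Lra.
From Coquelicot Require Import Coquelicot.
Open Scope R_scope.

Definition Pc (c1 c2 c3 x : R) : R :=
  c1 * (1 - x) + c2 * (1 + x) + c3 * (1 - x ^ 2).

Definition c3bar (c1 c2 : R) : R :=
  - / 2 * (sqrt (1 + c1) + sqrt (1 + c2)) * (sqrt (1 + c1) + sqrt (1 + c2) + 2).

Definition tau1 (c1 : R) : R := 2 - 2 * sqrt (1 + c1).
Definition tau2 (c1 : R) : R := 2 + 2 * sqrt (1 + c1).
Definition tau1' (c2 : R) : R := - 2 - 2 * sqrt (1 + c2).
Definition tau2' (c2 : R) : R := - 2 + 2 * sqrt (1 + c2).

Definition solves_on (c1 c2 c3 : R) (U : R -> R) (a b : R) : Prop :=
  forall x, a < x < b ->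
    exists d, is_derive U x d /\
      (1 - x ^ 2) * d + 2 * x * U x + / 2 * (U x) ^ 2 = Pc c1 c2 c3 x.

(* Main.v *)
Require Import Defs.
From Stdlib Require Import Reals Lra Lia Psatz.
From Coquelicot Require Import Coquelicot.
Open Scope R_scope.

Fixpoint dseq (A B C : R) (n : nat) : R :=
  match n with
  | O => 1
  | S k => dseq A B C k * ((INR k)^2 + A * INR k + B) / ((INR k + 1) * (INR k + C))
  end.

Lemma dseq_S A B C k : dseq A B C (S k) =
  dseq A B C k * ((INR k)^2 + A * INR k + B) / ((INR k + 1) * (INR k + C)).
Proof. reflexivity. Qed.

Lemma dseq_pos A B C n : 0 <= A -> 0 < B -> 0 < C -> 0 < dseq A B C n.
Proof.
  intros hA hB hC. induction n as [|k IH]; simpl dseq; [lra|].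
  pose proof (pos_INR k).
  apply Rdiv_lt_0_compat.
  - apply Rmult_lt_0_compat; [exact IH| nra].
  - apply Rmult_lt_0_compat; lra.
Qed.

Lemma dseq_radius A B C : 0 <= A -> 0 < B -> 0 < C -> CV_radius (dseq A B C) = 1.
Proof.
  intros hA hB hC.
  replace 1 with (/ 1) by field.
  apply CV_radius_finite_DAlembert.
  - intro n. apply Rgt_not_eq, dseq_pos; auto.
  - lra.
  - apply is_lim_seq_spec. intro eps.
    set (K := Rabs (A - 1 - C) + Rabs (B - C) / C).
    assert (hK : 0 <= K).
    { unfold K. pose proof (Rabs_pos (A-1-C)); pose proof (Rabs_pos (B-C)).
      assert (0 <= Rabs (B - C) / C) by (apply Rdiv_le_0_compat; lra). lra. }
    destruct (INR_unbounded (K / eps)) as [N HN].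
    exists N. intros n Hn.
    assert (hn : INR N <= INR n) by (apply le_INR; lia).
    pose proof (pos_INR n) as hn0.
    pose proof (dseq_pos A B C n hA hB hC) as hd.
    rewrite dseq_S.
    replace (dseq A B C n * (INR n ^ 2 + A * INR n + B) / ((INR n + 1) * (INR n + C)) /
      dseq A B C n) with ((INR n ^ 2 + A * INR n + B) / ((INR n + 1) * (INR n + C)))
      by (field; split; lra).
    rewrite (Rabs_pos_eq (_ / _)).
    2: { apply Rdiv_le_0_compat; nra. }
    replace ((INR n ^ 2 + A * INR n + B) / ((INR n + 1) * (INR n + C)) - 1)
      with (((A - 1 - C) * INR n + (B - C)) / ((INR n + 1) * (INR n + C)))
      by (field; split; lra).
    set (m := INR n) in *.
    assert (hbound : Rabs (((A - 1 - C) * m + (B - C)) / ((m + 1) * (m + C))) <= K / (m + 1)).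
    { rewrite Rabs_div by nra. rewrite (Rabs_pos_eq ((m+1)*(m+C))) by nra.
      apply Rle_trans with ((Rabs (A - 1 - C) * m + Rabs (B - C)) / ((m + 1) * (m + C))).
      { apply Rmult_le_compat_r. apply Rlt_le, Rinv_0_lt_compat; nra.
        eapply Rle_trans. apply Rabs_triang. rewrite Rabs_mult, (Rabs_pos_eq m) by lra. lra. }
      unfold K. pose proof (Rabs_pos (A-1-C)); pose proof (Rabs_pos (B-C)).
      apply (Rmult_le_reg_r ((m+1)*(m+C))). nra.
      field_simplify; try lra.
      unfold Rdiv. 
      assert (Rabs (A - 1 - C) * m * C <= Rabs (A - 1 - C) * (m+C) * C) by nra.
      apply Rmult_le_reg_r with C; [lra|].
      field_simplify; try lra. nra. }
    eapply Rle_lt_trans. exact hbound.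
    destruct eps as [e he]; simpl in *.
    assert (hK2 : K < e * (m + 1)).
    { assert (K / e * e = K) by (field; lra).
      assert (K / e < m + 1) by lra. nra. }
    apply (Rmult_lt_reg_r (m+1)); [lra|].
    replace (K / (m + 1) * (m + 1)) with K by (field; lra). lra.
Qed.

Lemma PSeries_ge0 a x : (forall n, 0 <= a n) -> 0 <= x -> ex_pseries a x -> 0 <= PSeries a x.
Proof.
  intros ha hx he.
  assert (h0 : Series (fun _ : nat => 0) = 0).
  { pose proof (PSeries_const_0 0) as hz. unfold PSeries in hz. rewrite <- hz at 1.
    apply Series_ext. intro; ring. }
  rewrite <- h0. unfold PSeries. apply Series_le.
  - intro n. split; [lra|]. apply Rmult_le_pos; auto. apply pow_le; auto.
  - eapply ex_series_ext; [|exact he]. intro n. simpl. rewrite pow_n_pow.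
    change (scal (x ^ n) (a n)) with ((x ^ n) * a n). ring.
Qed.

Lemma PSeries_ge_a0 a x : (forall n, 0 <= a n) -> 0 <= x -> Rbar_lt (Rabs x) (CV_radius a) ->
  a 0%nat <= PSeries a x.
Proof.
  intros ha hx hr.
  rewrite PSeries_decr_1 by (apply CV_radius_inside; auto).
  assert (0 <= PSeries (PS_decr_1 a) x).
  { apply PSeries_ge0; auto. intro n; apply ha.
    apply CV_radius_inside. rewrite CV_radius_decr_1; auto. }
  nra.
Qed.


Definition Psi0 A B C t := PSeries (dseq A B C) t.
Definition Psi1 A B C t := PSeries (PS_derive (dseq A B C)) t.
Definition Psi2 A B C t := PSeries (PS_derive (PS_derive (dseq A B C))) t.

Lemma rad0 A B C t : 0 <= A -> 0 < B -> 0 < C -> -1 < t < 1 -> Rbar_lt (Rabs t) (CV_radius (dseq A B C)).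
Proof. intros. rewrite dseq_radius by auto. simpl. apply Rabs_def1; lra. Qed.
Lemma rad1 A B C t : 0 <= A -> 0 < B -> 0 < C -> -1 < t < 1 -> Rbar_lt (Rabs t) (CV_radius (PS_derive (dseq A B C))).
Proof. intros. rewrite CV_radius_derive. apply rad0; auto. Qed.
Lemma rad2 A B C t : 0 <= A -> 0 < B -> 0 < C -> -1 < t < 1 -> Rbar_lt (Rabs t) (CV_radius (PS_derive (PS_derive (dseq A B C)))).
Proof. intros. rewrite CV_radius_derive. apply rad1; auto. Qed.

Lemma Psi0_der A B C t : 0 <= A -> 0 < B -> 0 < C -> -1 < t < 1 -> is_derive (Psi0 A B C) t (Psi1 A B C t).
Proof. intros. apply is_derive_PSeries. apply rad0; auto. Qed.
Lemma Psi1_der A B C t : 0 <= A -> 0 < B -> 0 < C -> -1 < t < 1 -> is_derive (Psi1 A B C) t (Psi2 A B C t).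
Proof. intros. apply is_derive_PSeries. apply rad1; auto. Qed.

Lemma Psi0_ge1 A B C t : 0 <= A -> 0 < B -> 0 < C -> 0 <= t < 1 -> 1 <= Psi0 A B C t.
Proof.
  intros. change 1 with (dseq A B C 0). apply PSeries_ge_a0; try lra.
  intro n; apply Rlt_le, dseq_pos; auto. apply rad0; auto; lra.
Qed.

Lemma Psi1_pos A B C t : 0 <= A -> 0 < B -> 0 < C -> 0 <= t < 1 -> 0 < Psi1 A B C t.
Proof.
  intros. apply Rlt_le_trans with (PS_derive (dseq A B C) 0).
  - unfold PS_derive. apply Rmult_lt_0_compat. apply lt_0_INR; lia. apply dseq_pos; auto.
  - apply PSeries_ge_a0; try lra.
    intro n; unfold PS_derive. apply Rmult_le_pos. apply pos_INR. apply Rlt_le, dseq_pos; auto.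
    apply rad1; auto; lra.
Qed.

Lemma coef_id A B C n : 0 <= A -> 0 < B -> 0 < C ->
  (INR n + 1) * INR n * dseq A B C (S n) - INR n * (INR n - 1) * dseq A B C n
  + C * (INR n + 1) * dseq A B C (S n) - (A + 1) * INR n * dseq A B C n - B * dseq A B C n = 0.
Proof.
  intros. rewrite dseq_S. pose proof (pos_INR n). field. split; lra.
Qed.

Lemma Psi_ode A B C t : 0 <= A -> 0 < B -> 0 < C -> -1 < t < 1 ->
  t * (1 - t) * Psi2 A B C t + (C - (A + 1) * t) * Psi1 A B C t - B * Psi0 A B C t = 0.
Proof.
  intros hA hB hC ht.
  set (d := dseq A B C).
  set (D1 := PS_derive d). set (D2 := PS_derive D1).
  assert (e0 : is_pseries d t (Psi0 A B C t)) by (apply PSeries_correct, CV_radius_inside, rad0; auto).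
  assert (e1 : is_pseries D1 t (Psi1 A B C t)) by (apply PSeries_correct, CV_radius_inside, rad1; auto).
  assert (e2 : is_pseries D2 t (Psi2 A B C t)) by (apply PSeries_correct, CV_radius_inside, rad2; auto).
  assert (f1 : is_pseries (fun n => (INR n + 1) * INR n * d (S n)) t (t * Psi2 A B C t)).
  { eapply is_pseries_ext; [|apply (is_pseries_incr_1 _ _ _ e2)].
    intro n; destruct n as [|n]; unfold PS_incr_1, D2, D1, PS_derive; cbn -[INR]; [unfold zero; simpl; ring|].
    rewrite ?S_INR; try ring; try reflexivity. }
  assert (f2 : is_pseries (fun n => INR n * (INR n - 1) * d n) t (t * (t * Psi2 A B C t))).
  { eapply is_pseries_ext; [|apply (is_pseries_incr_1 _ _ _ f1)].
    intro n; destruct n as [|n]; unfold PS_incr_1; cbn -[INR]; [unfold zero; simpl; ring|].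
    rewrite ?S_INR; try ring; try reflexivity. }
  assert (f3 : is_pseries (fun n => (INR n + 1) * d (S n)) t (Psi1 A B C t)).
  { eapply is_pseries_ext; [|apply e1]. intro n. unfold D1, PS_derive. rewrite S_INR; try ring; try reflexivity. }
  assert (f4 : is_pseries (fun n => INR n * d n) t (t * Psi1 A B C t)).
  { eapply is_pseries_ext; [|apply (is_pseries_incr_1 _ _ _ f3)].
    intro n; destruct n as [|n]; unfold PS_incr_1; cbn -[INR]; [unfold zero; simpl; ring|].
    rewrite ?S_INR; try ring; try reflexivity. }
  assert (hc : forall c : R, mult t c = mult c t) by (intro; apply Rmult_comm).
  pose proof (is_pseries_scal (-1) _ t _ (hc _) f2) as g2.
  pose proof (is_pseries_scal C _ t _ (hc _) f3) as g3.
  pose proof (is_pseries_scal (-(A+1)) _ t _ (hc _) f4) as g4.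
  pose proof (is_pseries_scal (-B) _ t _ (hc _) e0) as g5.
  pose proof (is_pseries_plus _ _ _ _ _ f1 g2) as h1.
  pose proof (is_pseries_plus _ _ _ _ _ g3 g4) as h2.
  pose proof (is_pseries_plus _ _ _ _ _ h1 h2) as h3.
  pose proof (is_pseries_plus _ _ _ _ _ h3 g5) as g.
  apply is_pseries_unique in g.
  rewrite (PSeries_ext _ (fun _ => 0)) in g.
  2: { intro n. unfold PS_plus, PS_scal, plus, scal; simpl. unfold mult; simpl.
       pose proof (coef_id A B C n hA hB hC). unfold d. lra. }
  rewrite PSeries_const_0 in g. unfold plus, scal in g; simpl in g. unfold mult in g; simpl in g.
  lra.
Qed.

Definition Rfun (s1 s2 B t : R) : R :=
  (1 - t) * Psi1 (1 + s1 + s2) B (1 + s1) t / Psi0 (1 + s1 + s2) B (1 + s1) t.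

Definition Fr (s1 s2 B t r : R) : R :=
  (1 - t) * B - r * ((1 + s1) - (1 + s1 + s2) * t) - t * r ^ 2.

Lemma Rfun_pos s1 s2 B t : 0 <= s1 -> 0 <= s2 -> 0 < B -> 0 < t < 1 -> 0 < Rfun s1 s2 B t.
Proof.
  intros. unfold Rfun.
  assert (h0 := Psi0_ge1 (1+s1+s2) B (1+s1) t ltac:(lra) H1 ltac:(lra) ltac:(lra)).
  assert (h1 := Psi1_pos (1+s1+s2) B (1+s1) t ltac:(lra) H1 ltac:(lra) ltac:(lra)).
  apply Rdiv_lt_0_compat; [apply Rmult_lt_0_compat|]; lra.
Qed.

Lemma Rfun_der s1 s2 B t : 0 <= s1 -> 0 <= s2 -> 0 < B -> 0 < t < 1 ->
  is_derive (Rfun s1 s2 B) t (Fr s1 s2 B t (Rfun s1 s2 B t) / (t * (1 - t))).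
Proof.
  intros hs1 hs2 hB ht.
  set (A := 1 + s1 + s2). set (C := 1 + s1).
  assert (hA : 0 <= A) by (unfold A; lra). assert (hC : 0 < C) by (unfold C; lra).
  assert (h0 := Psi0_ge1 A B C t hA hB hC ltac:(lra)).
  assert (d0 := Psi0_der A B C t hA hB hC ltac:(lra)).
  assert (d1 := Psi1_der A B C t hA hB hC ltac:(lra)).
  assert (ode := Psi_ode A B C t hA hB hC ltac:(lra)).
  unfold Rfun; fold A C.
  auto_derive.
  - repeat split; try (eexists; eassumption). lra.
  - replace (Derive (fun x : R => Psi1 A B C x) t) with (Psi2 A B C t)
      by (symmetry; apply is_derive_unique; exact d1).
    replace (Derive (fun x : R => Psi0 A B C x) t) with (Psi1 A B C t)
      by (symmetry; apply is_derive_unique; exact d0).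
    unfold Fr; fold A C.
    assert (e2 : Psi2 A B C t = (B * Psi0 A B C t - (C - (A + 1) * t) * Psi1 A B C t) / (t * (1 - t))).
    { field_simplify_eq; [|split; lra]. lra. }
    rewrite e2. field. repeat split; lra.
Qed.

Definition U0f (s1 s2 x : R) : R := (1 + s1) * (1 - x) - (1 + s2) * (1 + x).
Definition Wf (s1 s2 B x : R) : R := U0f s1 s2 x + 2 * (1 + x) * Rfun s1 s2 B ((1 + x) / 2).
Definition Bof c1 c2 c3 := (c3 - c3bar c1 c2) / 2.
Definition Wsol c1 c2 c3 := Wf (sqrt (1 + c1)) (sqrt (1 + c2)) (Bof c1 c2 c3).

Lemma Wf_der s1 s2 B x : 0 <= s1 -> 0 <= s2 -> 0 < B -> -1 < x < 1 ->
  is_derive (Wf s1 s2 B) x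
   (-(1+s1) - (1+s2) + 2 * Rfun s1 s2 B ((1+x)/2)
     + (1+x) * (Fr s1 s2 B ((1+x)/2) (Rfun s1 s2 B ((1+x)/2)) / (((1+x)/2) * (1 - (1+x)/2)))).
Proof.
  intros hs1 hs2 hB hx.
  assert (hd := Rfun_der s1 s2 B ((1+x)/2) hs1 hs2 hB ltac:(lra)).
  unfold Wf, U0f. auto_derive.
  - eexists; exact hd.
  - replace (Derive (fun x0 : R => Rfun s1 s2 B x0) ((1 + x) * / 2)) with
      (Fr s1 s2 B ((1 + x) / 2) (Rfun s1 s2 B ((1 + x) / 2)) / ((1 + x) / 2 * (1 - (1 + x) / 2)))
      by (symmetry; apply is_derive_unique; exact hd).
    change ((1 + x) * / 2) with ((1 + x) / 2).
    set (r := Rfun s1 s2 B ((1 + x) / 2)).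
    set (f := Fr s1 s2 B ((1 + x) / 2) r). field. lra.
Qed.

Lemma Wsol_solves c1 c2 c3 : -1 <= c1 -> -1 <= c2 -> c3bar c1 c2 < c3 ->
  solves_on c1 c2 c3 (Wsol c1 c2 c3) (-1) 1.
Proof.
  intros h1 h2 h3 x hx.
  set (s1 := sqrt (1 + c1)). set (s2 := sqrt (1 + c2)). set (B := Bof c1 c2 c3).
  assert (hs1 : 0 <= s1) by apply sqrt_pos. assert (hs2 : 0 <= s2) by apply sqrt_pos.
  assert (hB : 0 < B) by (unfold B, Bof; lra).
  assert (e1 : c1 = s1 ^ 2 - 1) by (unfold s1; rewrite pow2_sqrt; lra).
  assert (e2 : c2 = s2 ^ 2 - 1) by (unfold s2; rewrite pow2_sqrt; lra).
  assert (e3 : c3 = 2 * B + c3bar c1 c2) by (unfold B, Bof; field).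
  eexists. split.
  - unfold Wsol. fold s1 s2 B. apply Wf_der; auto.
  - unfold Wsol. fold s1 s2 B.
    rewrite e3. unfold c3bar. fold s1 s2. rewrite e1, e2.
    unfold Pc, Wf, U0f, Fr.
    set (r := Rfun s1 s2 B ((1 + x) / 2)).
    field. lra.
Qed.

Lemma derive_cont (f : R -> R) (x l : R) : is_derive f x l -> continuity_pt f x.
Proof.
  intro h. apply continuity_pt_filterlim.
  apply (@ex_derive_continuous R_AbsRing R_NormedModule). eexists; exact h.
Qed.

Lemma mono_le f df p q : p <= q ->
  (forall s, p <= s <= q -> is_derive f s (df s)) ->
  (forall s, p <= s <= q -> df s <= 0) -> f q <= f p.
Proof.
  intros hpq hd hn.
  destruct (MVT_gen f p q df) as [c [hc e]].
  - intros x hx. rewrite Rmin_left in hx by lra. rewrite Rmax_right in hx by lra. apply hd; lra.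
  - intros x hx. rewrite Rmin_left in hx by lra. rewrite Rmax_right in hx by lra.
    apply (derive_cont _ _ _ (hd x hx)).
  - rewrite Rmin_left in hc by lra. rewrite Rmax_right in hc by lra.
    assert (df c <= 0) by (apply hn; lra).
    assert (df c * (q - p) <= 0) by nra. lra.
Qed.

Lemma barrier_up f df p q L : p <= q ->
  (forall s, p <= s <= q -> is_derive f s (df s)) ->
  (forall s, p <= s <= q -> L <= f s -> df s < 0) -> f p < L -> f q < L.
Proof.
  intros hpq hd hn hp.
  destruct (Rlt_or_le (f q) L) as [h|h]; [exact h|exfalso].
  destruct (continuity_ab_maj f p q hpq) as [m [hm hmr]].
  { intros c hc. apply (derive_cont _ _ _ (hd c hc)). }
  assert (hfm : L <= f m) by (specialize (hm q ltac:(lra)); lra).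
  assert (hmp : p < m) by (destruct (Req_dec m p); [subst; lra| lra]).
  assert (hneg := hn m hmr hfm).
  pose proof (proj1 (is_derive_Reals f m (df m)) (hd m hmr)) as hl.
  destruct (hl (- df m / 2) ltac:(lra)) as [del hdel].
  set (h0 := - Rmin (del / 2) ((m - p) / 2)).
  assert (hdp := cond_pos del).
  assert (hh0 : h0 < 0).
  { unfold h0. apply Ropp_lt_gt_0_contravar. apply Rmin_pos; lra. }
  assert (hh1 : - h0 <= del / 2) by (unfold h0; rewrite Ropp_involutive; apply Rmin_l).
  assert (hh2 : - h0 <= (m - p) / 2) by (unfold h0; rewrite Ropp_involutive; apply Rmin_r).
  specialize (hdel h0 ltac:(lra)).
  assert (Rabs h0 < del) by (rewrite Rabs_left; lra).
  specialize (hdel ltac:(assumption)).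
  assert (hq : f (m + h0) <= f m) by (apply hm; lra).
  apply Rabs_def2 in hdel. destruct hdel as [hd1 hd2].
  assert (e : (f (m + h0) - f m) / h0 < df m / 2) by lra.
  assert (0 <= (f (m + h0) - f m) / h0).
  { replace ((f (m + h0) - f m) / h0) with ((f m - f (m + h0)) / (- h0)) by (field; lra).
    apply Rdiv_le_0_compat; lra. }
  lra.
Qed.

Lemma Fr_upper s1 s2 B t r e : 0 <= s1 -> 0 <= s2 -> 0 < B -> 0 < e -> 0 < 1 - t -> 1 - t <= 1/2 ->
  (1 - t) * (e * (s2 + e) + B) <= e ^ 2 / 2 -> s2 + e <= r -> Fr s1 s2 B t r <= - (e ^ 2 / 2).
Proof.
  intros hs1 hs2 hB he hu1 hu2 hk hr.
  unfold Fr. set (u := 1 - t) in *.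
  replace t with (1 - u) by (unfold u; ring).
  assert (hA : (1 + s1 + s2) * u * r >= 0) by (apply Rle_ge; repeat apply Rmult_le_pos; lra).
  assert (h1 : r * ((1 - u) * r - s2) >= (s2 + e) * ((1 - u) * (s2 + e) - s2)).
  { assert ((r - (s2 + e)) * ((1 - u) * (r + (s2 + e)) - s2) >= 0).
    { apply Rle_ge, Rmult_le_pos; nra. }
    nra. }
  assert (h2 : u * (s2 + e) <= e / 2).
  { assert (u * e * (s2 + e) <= e ^ 2 / 2) by nra.
    apply (Rmult_le_reg_l e); [lra|]. nra. }
  assert (h3 : u * B <= e ^ 2 / 2 - e * (u * (s2 + e))) by nra.
  assert (h4 : (s2 + e) * (e - u * (s2 + e)) >= e * (e - u * (s2 + e))).
  { apply Rle_ge, Rmult_le_compat_r; lra. }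
  nra.
Qed.

Lemma Fr_lower s1 s2 B t r e : 0 <= s1 -> 0 <= s2 -> 0 < B -> 0 < e -> 0 < 1 - t -> t <= 1 ->
  (1 - t) * (1 + s1 + s2) <= e / 2 -> 0 < r -> r <= s2 - e -> r * e / 2 <= Fr s1 s2 B t r.
Proof.
  intros hs1 hs2 hB he hu1 hu2 hk hr hr2.
  unfold Fr.
  assert (t * r ^ 2 <= r ^ 2) by nra.
  assert ((1 - t) * B >= 0) by (apply Rle_ge, Rmult_le_pos; lra).
  assert (r * ((1 + s1 + s2) * (1 - t)) <= r * (e / 2)) by (apply Rmult_le_compat_l; lra).
  replace ((1 + s1) - (1 + s1 + s2) * t) with (- s2 + (1 + s1 + s2) * (1 - t)) by ring.
  nra.
Qed.

Lemma Rfun_der' s1 s2 B : 0 <= s1 -> 0 <= s2 -> 0 < B -> forall s, 0 < s < 1 ->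
  is_derive (Rfun s1 s2 B) s ((fun u => Fr s1 s2 B u (Rfun s1 s2 B u) / (u * (1 - u))) s).
Proof. intros; apply Rfun_der; auto. Qed.

Lemma der_minus_ln (f : R -> R) s d c : s < 1 -> is_derive f s d ->
  is_derive (fun u => f u - c * ln (1 - u)) s (d + c / (1 - s)).
Proof.
  intros hs hd. auto_derive.
  - split; [eexists; exact hd| lra].
  - replace (Derive (fun x : R => f x) s) with d by (symmetry; apply is_derive_unique; exact hd).
    field. lra.
Qed.

Lemma exp_neg_le1 K : 0 <= K -> 0 < exp (- K) <= 1.
Proof.
  intros hK. split; [apply exp_pos|].
  destruct (Rle_lt_or_eq_dec 0 K hK) as [h|h].
  - rewrite <- exp_0. left. apply exp_increasing. lra.
  - subst. rewrite Ropp_0, exp_0. lra.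
Qed.

Lemma R_upper s1 s2 B e : 0 <= s1 -> 0 <= s2 -> 0 < B -> 0 < e ->
  exists t1, 0 < t1 < 1 /\ forall t, t1 <= t < 1 -> Rfun s1 s2 B t < s2 + e.
Proof.
  intros hs1 hs2 hB he.
  set (R := Rfun s1 s2 B). set (L := s2 + e).
  set (df := fun u => Fr s1 s2 B u (R u) / (u * (1 - u))).
  assert (hk0 : 0 < e * (s2 + e) + B) by nra.
  set (eta := Rmin (1/2) (e ^ 2 / 2 / (e * (s2 + e) + B))).
  assert (heta1 : eta <= 1/2) by apply Rmin_l.
  assert (heta2 : eta <= e ^ 2 / 2 / (e * (s2 + e) + B)) by apply Rmin_r.
  assert (heta0 : 0 < eta).
  { apply Rmin_pos; [lra|]. apply Rdiv_lt_0_compat; [nra|lra]. }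
  set (t0 := 1 - eta).
  assert (key : forall t, t0 <= t < 1 -> L <= R t -> Fr s1 s2 B t (R t) <= - (e ^ 2 / 2)).
  { intros t ht hL. apply Fr_upper; auto; unfold t0 in ht; try lra.
    apply Rle_trans with (eta * (e * (s2 + e) + B)).
    - apply Rmult_le_compat_r; lra.
    - apply (Rmult_le_compat_r (e * (s2 + e) + B)) in heta2; [|lra].
      replace (e ^ 2 / 2 / (e * (s2 + e) + B) * (e * (s2 + e) + B)) with (e ^ 2 / 2) in heta2
        by (field; lra). lra. }
  assert (hder : forall s, t0 <= s < 1 -> is_derive R s (df s)).
  { intros s hs. apply Rfun_der'; auto. unfold t0 in hs; lra. }
  assert (keyd : forall t, t0 <= t < 1 -> L <= R t -> df t <= - (e ^ 2 / 2) / (1 - t)).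
  { intros t ht hL. specialize (key t ht hL). unfold df. unfold t0 in ht.
    assert (0 < t * (1 - t) <= 1 - t) by (split; [apply Rmult_lt_0_compat|]; nra).
    unfold Rdiv. apply Rle_trans with (- (e ^ 2 / 2) * / (t * (1 - t))).
    - apply Rmult_le_compat_r; [apply Rlt_le, Rinv_0_lt_compat|]; lra.
    - assert (/ (1 - t) <= / (t * (1 - t))) by (apply Rinv_le_contravar; lra). nra. }
  set (del := e ^ 2 / 2).
  assert (hdel : 0 < del) by (unfold del; nra).
  set (K := Rmax 0 ((R t0 - L + 1) / del)).
  assert (hK0 : 0 <= K) by apply Rmax_l.
  assert (hK1 : (R t0 - L + 1) / del <= K) by apply Rmax_r.
  set (T := 1 - eta * exp (- K)).
  assert (hexp := exp_neg_le1 K hK0).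
  assert (hT1 : 0 < 1 - T <= eta).
  { unfold T. split; [|nra]. replace (1 - (1 - eta * exp (- K))) with (eta * exp (- K)) by ring.
    apply Rmult_lt_0_compat; lra. }
  assert (hlnT : ln (1 - T) = ln eta - K).
  { unfold T. replace (1 - (1 - eta * exp (- K))) with (eta * exp (- K)) by ring.
    rewrite ln_mult by lra. rewrite ln_exp. ring. }
  assert (ht0T : t0 <= T) by (unfold t0; lra).
  assert (ht0 : 1/2 <= t0) by (unfold t0; lra).
  assert (hlt0 : ln (1 - t0) = ln eta) by (unfold t0; f_equal; ring).
  assert (hdfneg : forall u, t0 <= u < 1 -> L <= R u -> df u < 0).
  { intros u hu hL. specialize (keyd u hu hL).
    assert (0 < (e ^ 2 / 2) / (1 - u)) by (apply Rdiv_lt_0_compat; unfold t0 in hu; nra).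
    lra. }
  assert (RT : R T < L).
  { destruct (Rlt_or_le (R T) L) as [h|hge]; [exact h|exfalso].
    assert (hall : forall s, t0 <= s <= T -> L <= R s).
    { intros s hs. destruct (Rlt_or_le (R s) L) as [hs'|hs']; [|exact hs'].
      exfalso.
      assert (R T < L).
      { apply (barrier_up R df s T L); try lra.
        - intros u hu. apply hder; lra.
        - intros u hu hL. apply hdfneg; auto; lra. }
      lra. }
    assert (hm := mono_le (fun u => R u - del * ln (1 - u)) (fun u => df u + del / (1 - u)) t0 T
       ltac:(lra)).
    simpl in hm.
    assert (hm' : R T - del * ln (1 - T) <= R t0 - del * ln (1 - t0)).
    { apply hm.
      - intros u hu. apply der_minus_ln; [lra|]. apply hder; lra.
      - intros u hu. assert (hh := keyd u ltac:(lra) (hall u hu)). unfold del.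
        assert (e ^ 2 / 2 / (1 - u) = - (- (e ^ 2 / 2) / (1 - u))) by (field; lra). lra. }
    rewrite hlnT, hlt0 in hm'.
    apply (Rmult_le_compat_r del) in hK1; [|lra].
    replace ((R t0 - L + 1) / del * del) with (R t0 - L + 1) in hK1 by (field; lra).
    assert (hge2 := hall T ltac:(lra)). nra. }
  exists T. split; [lra|].
  intros t ht.
  destruct (Req_dec t T) as [->|hne]; [exact RT|].
  apply (barrier_up R df T t L); try lra.
  - intros u hu. apply hder; lra.
  - intros u hu hL. apply hdfneg; auto; lra.
Qed.

Lemma der_opp (f : R -> R) s d : is_derive f s d -> is_derive (fun u => - f u) s (- d).
Proof.
  intros hd. auto_derive. eexists; exact hd.
  replace (Derive (fun x : R => f x) s) with d by (symmetry; apply is_derive_unique; exact hd). ring.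
Qed.

Lemma der_lnR (f : R -> R) s d c : s < 1 -> 0 < f s -> is_derive f s d ->
  is_derive (fun u => - (ln (f u) + c * ln (1 - u))) s (- (d / f s - c / (1 - s))).
Proof.
  intros hs hf hd. auto_derive.
  - repeat split; try lra. eexists; exact hd.
  - replace (Derive (fun x : R => f x) s) with d by (symmetry; apply is_derive_unique; exact hd).
    field. lra.
Qed.

Lemma R_lower s1 s2 B e : 0 <= s1 -> 0 <= s2 -> 0 < B -> 0 < e ->
  exists t1, 0 < t1 < 1 /\ forall t, t1 <= t < 1 -> s2 - e < Rfun s1 s2 B t.
Proof.
  intros hs1 hs2 hB he.
  set (R := Rfun s1 s2 B).
  assert (hRpos : forall t, 0 < t < 1 -> 0 < R t) by (intros; apply Rfun_pos; auto).
  destruct (Rle_or_lt (s2 - e) 0) as [hle|hL0].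
  { exists (1/2). split; [lra|]. intros t ht. specialize (hRpos t ltac:(lra)). lra. }
  set (L := s2 - e).
  set (A := 1 + s1 + s2).
  set (df := fun u => Fr s1 s2 B u (R u) / (u * (1 - u))).
  set (eta := Rmin (1/2) (e / 2 / A)).
  assert (heta1 : eta <= 1/2) by apply Rmin_l.
  assert (heta2 : eta <= e / 2 / A) by apply Rmin_r.
  assert (heta0 : 0 < eta).
  { apply Rmin_pos; [lra|]. apply Rdiv_lt_0_compat; unfold A; lra. }
  set (t0 := 1 - eta).
  assert (ht0 : 1/2 <= t0) by (unfold t0; lra).
  assert (hder : forall s, t0 <= s < 1 -> is_derive R s (df s)).
  { intros s hs. apply Rfun_der'; auto. lra. }
  assert (keyd : forall t, t0 <= t < 1 -> R t <= L -> (R t * e / 2) / (1 - t) <= df t).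
  { intros t ht hL.
    assert (hr := hRpos t ltac:(lra)).
    assert (hF : R t * e / 2 <= Fr s1 s2 B t (R t)).
    { apply Fr_lower; auto; try lra.
      - unfold t0 in ht.
        apply Rle_trans with (eta * A); [apply Rmult_le_compat_r; unfold A; lra|].
        apply (Rmult_le_compat_r A) in heta2; [|unfold A; lra].
        replace (e / 2 / A * A) with (e / 2) in heta2 by (field; unfold A; lra). exact heta2. }
    unfold df.
    assert (0 < t * (1 - t) <= 1 - t) by (split; [apply Rmult_lt_0_compat|]; nra).
    assert (0 < R t * e / 2) by (apply Rmult_lt_0_compat; [apply Rmult_lt_0_compat|]; lra).
    unfold Rdiv at 2. apply Rle_trans with (R t * e / 2 * / (t * (1 - t))).
    - unfold Rdiv at 1. apply Rmult_le_compat_l; [lra|]. apply Rinv_le_contravar; lra.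
    - apply Rmult_le_compat_r; [apply Rlt_le, Rinv_0_lt_compat|]; lra. }
  assert (hdfpos : forall u, t0 <= u < 1 -> R u <= L -> 0 < df u).
  { intros u hu hL. specialize (keyd u hu hL).
    assert (0 < (R u * e / 2) / (1 - u)).
    { apply Rdiv_lt_0_compat; [|lra]. specialize (hRpos u ltac:(lra)).
      apply Rmult_lt_0_compat; [apply Rmult_lt_0_compat|]; lra. }
    lra. }
  assert (barrier : forall p q, t0 <= p <= q -> q < 1 -> L < R p -> L < R q).
  { intros p q hp hq hRp.
    assert (- R q < - L); [|lra].
    apply (barrier_up (fun u => - R u) (fun u => - df u) p q (- L)); try lra.
    - intros u hu. apply der_opp, hder; lra.
    - intros u hu hL. assert (0 < df u) by (apply hdfpos; lra). lra. }
  assert (ht0' : t0 < 1) by (unfold t0; lra).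
  set (Rt0 := R t0).
  assert (hRt0 : 0 < Rt0) by (apply hRpos; lra).
  set (K := Rmax 0 ((ln L - ln Rt0 + 1) / (e / 2))).
  assert (hK0 : 0 <= K) by apply Rmax_l.
  assert (hK1 : (ln L - ln Rt0 + 1) / (e / 2) <= K) by apply Rmax_r.
  set (T := 1 - eta * exp (- K)).
  assert (hexp := exp_neg_le1 K hK0).
  assert (hT1 : 0 < 1 - T <= eta).
  { unfold T. split; [|nra]. replace (1 - (1 - eta * exp (- K))) with (eta * exp (- K)) by ring.
    apply Rmult_lt_0_compat; lra. }
  assert (hlnT : ln (1 - T) = ln eta - K).
  { unfold T. replace (1 - (1 - eta * exp (- K))) with (eta * exp (- K)) by ring.
    rewrite ln_mult by lra. rewrite ln_exp. ring. }
  assert (ht0T : t0 <= T) by (unfold t0; lra).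
  assert (hlt0 : ln (1 - t0) = ln eta) by (unfold t0; f_equal; ring).
  assert (RT : L < R T).
  { destruct (Rlt_or_le L (R T)) as [h|hge]; [exact h|exfalso].
    assert (hall : forall s, t0 <= s <= T -> R s <= L).
    { intros s hs. destruct (Rlt_or_le L (R s)) as [hs'|hs']; [|exact hs'].
      exfalso. assert (L < R T) by (apply (barrier s T); lra). lra. }
    assert (hm := mono_le (fun u => - (ln (R u) + e / 2 * ln (1 - u)))
                          (fun u => - (df u / R u - e / 2 / (1 - u))) t0 T ltac:(lra)).
    simpl in hm.
    assert (hm' : - (ln (R T) + e / 2 * ln (1 - T)) <= - (ln (R t0) + e / 2 * ln (1 - t0))).
    { apply hm.
      - intros u hu. apply der_lnR; [lra| apply hRpos; lra | apply hder; lra].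
      - intros u hu. assert (hh := keyd u ltac:(lra) (hall u hu)).
        assert (hru := hRpos u ltac:(lra)).
        assert (e / 2 / (1 - u) <= df u / R u); [|lra].
        apply (Rmult_le_reg_r (R u)); [lra|].
        replace (df u / R u * R u) with (df u) by (field; lra).
        replace (e / 2 / (1 - u) * R u) with (R u * e / 2 / (1 - u)) by (field; lra). exact hh. }
    rewrite hlnT, hlt0 in hm'. fold Rt0 in hm'.
    apply (Rmult_le_compat_r (e / 2)) in hK1; [|lra].
    replace ((ln L - ln Rt0 + 1) / (e / 2) * (e / 2)) with (ln L - ln Rt0 + 1) in hK1 by (field; lra).
    assert (hlnRT : ln L < ln (R T)) by nra.
    apply ln_lt_inv in hlnRT; [lra|unfold L; lra|apply hRpos; lra]. }
  exists T. split; [lra|].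
  intros t ht. apply (barrier T t); lra.
Qed.

Lemma exd_cont (f : R -> R) x : ex_derive f x -> continuity_pt f x.
Proof.
  intros [l h]. exact (derive_cont f x l h).
Qed.

Definition dY c1 c2 c3 (Y : R -> R) s := (Pc c1 c2 c3 s - 2 * s * Y s - / 2 * (Y s) ^ 2) / (1 - s ^ 2).

Lemma solves_der c1 c2 c3 Y l r s : l < s < r -> -1 <= l -> r <= 1 -> solves_on c1 c2 c3 Y l r ->
  is_derive Y s (dY c1 c2 c3 Y s).
Proof.
  intros hs hl hr hsol. destruct (hsol s hs) as [d [hd he]].
  replace (dY c1 c2 c3 Y s) with d; [exact hd|].
  unfold dY. assert (0 < 1 - s ^ 2) by nra.
  apply (Rmult_eq_reg_r (1 - s ^ 2)); [|lra]. field_simplify; [|lra]. lra.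
Qed.

Lemma der_m (Y1 Y2 : R -> R) s d1 d2 : is_derive Y1 s d1 -> is_derive Y2 s d2 ->
  is_derive (fun u => (Y1 u - Y2 u) ^ 2) s (2 * (Y1 s - Y2 s) * (d1 - d2)).
Proof.
  intros h1 h2. auto_derive.
  - split; [eexists; exact h1|split; [eexists; exact h2|exact I]].
  - replace (Derive (fun x : R => Y1 x) s) with d1 by (symmetry; apply is_derive_unique; exact h1).
    replace (Derive (fun x : R => Y2 x) s) with d2 by (symmetry; apply is_derive_unique; exact h2).
    ring.
Qed.

Lemma der_mexp (m : R -> R) s d K : is_derive m s d ->
  is_derive (fun u => m u * exp (- K * u)) s ((d - K * m s) * exp (- K * s)).
Proof.
  intros h. auto_derive.
  - eexists; exact h.
  - replace (Derive (fun x : R => m x) s) with d by (symmetry; apply is_derive_unique; exact h).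
    ring.
Qed.

Lemma gronwall (m dm : R -> R) (K a b : R) : a <= b ->
  (forall s, a <= s <= b -> is_derive m s (dm s)) ->
  (forall s, a <= s <= b -> dm s <= K * m s) ->
  m b <= m a * exp (K * (b - a)).
Proof.
  intros hab hd hk.
  assert (h := mono_le (fun u => m u * exp (- K * u)) (fun u => (dm u - K * m u) * exp (- K * u)) a b hab).
  simpl in h.
  assert (h' : m b * exp (- K * b) <= m a * exp (- K * a)).
  { apply h.
    - intros s hs. apply der_mexp, hd; auto.
    - intros s hs. specialize (hk s hs). assert (0 < exp (- K * s)) by apply exp_pos.
      nra. }
  assert (e : exp (K * (b - a)) = exp (- K * a) * exp (K * b)).
  { rewrite <- exp_plus. f_equal. ring. }
  assert (e2 : exp (- K * b) * exp (K * b) = 1).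
  { rewrite <- exp_plus. replace (- K * b + K * b) with 0 by ring. apply exp_0. }
  rewrite e.
  assert (0 < exp (K * b)) by apply exp_pos.
  apply (Rmult_le_compat_r (exp (K * b))) in h'; [|lra].
  replace (m b * exp (- K * b) * exp (K * b)) with (m b) in h' by (rewrite Rmult_assoc, e2; ring).
  lra.
Qed.

Lemma dm_eq c1 c2 c3 (Y1 Y2 : R -> R) s : -1 < s < 1 ->
  2 * (Y1 s - Y2 s) * (dY c1 c2 c3 Y1 s - dY c1 c2 c3 Y2 s)
  = (- (4 * s + Y1 s + Y2 s) / (1 - s ^ 2)) * (Y1 s - Y2 s) ^ 2.
Proof.
  intros hs. unfold dY. assert (0 < 1 - s ^ 2) by nra. field. lra.
Qed.

Lemma uniq_fwd c1 c2 c3 (Y1 Y2 : R -> R) r x0 : r <= 1 -> -1 < x0 < r ->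
  solves_on c1 c2 c3 Y1 (-1) r -> solves_on c1 c2 c3 Y2 (-1) r -> Y1 x0 = Y2 x0 ->
  forall x, x0 <= x < r -> Y1 x = Y2 x.
Proof.
  intros hr hx0 h1 h2 he x hx.
  set (k := fun s => - (4 * s + Y1 s + Y2 s) / (1 - s ^ 2)).
  assert (hd1 : forall s, -1 < s < r -> is_derive Y1 s (dY c1 c2 c3 Y1 s))
    by (intros; eapply solves_der; eauto; lra).
  assert (hd2 : forall s, -1 < s < r -> is_derive Y2 s (dY c1 c2 c3 Y2 s))
    by (intros; eapply solves_der; eauto; lra).
  destruct (continuity_ab_maj k x0 x ltac:(lra)) as [Mx [hM hMx]].
  { intros c hc. apply exd_cont. unfold k.
    assert (hc1 := hd1 c ltac:(lra)). assert (hc2 := hd2 c ltac:(lra)).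
    auto_derive. repeat split; try (eexists; eassumption).
    assert (0 < 1 - c * (c * 1)) by nra. lra. }
  set (K := Rabs (k Mx)).
  assert (hg := gronwall (fun u => (Y1 u - Y2 u) ^ 2)
     (fun u => 2 * (Y1 u - Y2 u) * (dY c1 c2 c3 Y1 u - dY c1 c2 c3 Y2 u)) K x0 x ltac:(lra)).
  simpl in hg.
  assert (hm : (Y1 x - Y2 x) ^ 2 <= (Y1 x0 - Y2 x0) ^ 2 * exp (K * (x - x0))).
  { apply hg.
    - intros s hs. cbv beta. apply der_m; [apply hd1|apply hd2]; lra.
    - intros s hs. cbv beta. rewrite (dm_eq c1 c2 c3 Y1 Y2 s) by lra. fold (k s).
      assert (k s <= K) by (specialize (hM s hs); unfold K; pose proof (Rle_abs (k Mx)); lra).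
      replace (K * ((Y1 s - Y2 s) * ((Y1 s - Y2 s) * 1))) with (K * (Y1 s - Y2 s) ^ 2) by ring.
      apply Rmult_le_compat_r; [apply pow2_ge_0|assumption]. }
  rewrite he in hm. replace ((Y2 x0 - Y2 x0) ^ 2) with 0 in hm by ring.
  assert ((Y1 x - Y2 x) ^ 2 <= 0) by lra.
  assert (Y1 x - Y2 x = 0) by nra. lra.
Qed.

Lemma exp_le_mono x y : x <= y -> exp x <= exp y.
Proof.
  intros h. destruct (Rle_lt_or_eq_dec x y h) as [h'|h'].
  - left; apply exp_increasing; exact h'.
  - subst; lra.
Qed.

Lemma uniq_m1 c1 c2 c3 (Y1 Y2 : R -> R) r tau M d0 : r <= 1 -> -1 < r -> 2 <= tau -> 0 <= M -> 0 < d0 ->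
  solves_on c1 c2 c3 Y1 (-1) r -> solves_on c1 c2 c3 Y2 (-1) r ->
  (forall s, -1 < s < -1 + d0 -> Rabs (Y1 s - tau) <= M * (1 + s) /\ Rabs (Y2 s - tau) <= M * (1 + s)) ->
  forall x, -1 < x < r -> Y1 x = Y2 x.
Proof.
  intros hr hr' htau hM hd0 h1 h2 hb.
  set (x1 := Rmin (-1 + d0) (Rmin 0 r)).
  assert (hx1a : x1 <= -1 + d0) by apply Rmin_l.
  assert (hx1b : x1 <= 0) by (eapply Rle_trans; [apply Rmin_r|apply Rmin_l]).
  assert (hx1c : x1 <= r) by (eapply Rle_trans; [apply Rmin_r|apply Rmin_r]).
  assert (hx1d : -1 < x1) by (unfold x1; repeat apply Rmin_glb_lt; lra).
  assert (hd1 : forall s, -1 < s < r -> is_derive Y1 s (dY c1 c2 c3 Y1 s))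
    by (intros; eapply solves_der; eauto; lra).
  assert (hd2 : forall s, -1 < s < r -> is_derive Y2 s (dY c1 c2 c3 Y2 s))
    by (intros; eapply solves_der; eauto; lra).
  set (K := 2 * M).
  assert (claim : forall b, -1 < b < x1 -> Y1 b = Y2 b).
  { intros b hb1.
    assert (step : forall a, -1 < a < b -> (Y1 b - Y2 b) ^ 2 <= 4 * M ^ 2 * exp K * (1 + a) ^ 2).
    { intros a ha.
      assert (hg := gronwall (fun u => (Y1 u - Y2 u) ^ 2)
        (fun u => 2 * (Y1 u - Y2 u) * (dY c1 c2 c3 Y1 u - dY c1 c2 c3 Y2 u)) K a b ltac:(lra)).
      simpl in hg.
      assert (hm : (Y1 b - Y2 b) ^ 2 <= (Y1 a - Y2 a) ^ 2 * exp (K * (b - a))).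
      { apply hg.
        - intros s hs. cbv beta. apply der_m; [apply hd1|apply hd2]; lra.
        - intros s hs. cbv beta. rewrite (dm_eq c1 c2 c3 Y1 Y2 s) by lra.
          assert (hks : - (4 * s + Y1 s + Y2 s) / (1 - s ^ 2) <= K).
          { destruct (hb s ltac:(lra)) as [hb1' hb2'].
            apply Rabs_le_between in hb1'. apply Rabs_le_between in hb2'.
            assert (hp : 0 < 1 - s ^ 2) by nra.
            apply (Rmult_le_reg_r (1 - s ^ 2)); [lra|].
            replace (- (4 * s + Y1 s + Y2 s) / (1 - s ^ 2) * (1 - s ^ 2))
              with (- (4 * s + Y1 s + Y2 s)) by (field; lra).
            unfold K.
            assert (hb3 : - (4 * s + Y1 s + Y2 s) <= 2 * M * (1 + s)) by lra.
            assert (hb4 : 2 * M * (1 + s) <= 2 * M * (1 - s ^ 2)).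
            { apply Rmult_le_compat_l; [lra|]. nra. }
            lra. }
          replace (K * ((Y1 s - Y2 s) * ((Y1 s - Y2 s) * 1))) with (K * (Y1 s - Y2 s) ^ 2) by ring.
          apply Rmult_le_compat_r; [apply pow2_ge_0|assumption]. }
      assert (he : exp (K * (b - a)) <= exp K).
      { apply exp_le_mono. unfold K. assert (b - a <= 1) by lra. nra. }
      assert (ha2 : (Y1 a - Y2 a) ^ 2 <= 4 * M ^ 2 * (1 + a) ^ 2).
      { destruct (hb a ltac:(lra)) as [hb1' hb2'].
        apply Rabs_le_between in hb1'. apply Rabs_le_between in hb2'.
        assert (Rabs (Y1 a - Y2 a) <= 2 * M * (1 + a)).
        { apply Rabs_le. lra. }
        replace ((Y1 a - Y2 a) ^ 2) with (Rabs (Y1 a - Y2 a) ^ 2) by (rewrite <- Rsqr_pow2, <- Rsqr_abs, Rsqr_pow2; reflexivity).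
        assert (0 <= Rabs (Y1 a - Y2 a)) by apply Rabs_pos.
        nra. }
      assert (0 <= (Y1 a - Y2 a) ^ 2) by apply pow2_ge_0.
      assert (0 < exp (K * (b - a))) by apply exp_pos.
      apply Rle_trans with ((Y1 a - Y2 a) ^ 2 * exp K).
      - eapply Rle_trans; [exact hm|]. apply Rmult_le_compat_l; lra.
      - assert (0 < exp K) by apply exp_pos.
        replace (4 * M ^ 2 * exp K * (1 + a) ^ 2) with (4 * M ^ 2 * (1 + a) ^ 2 * exp K) by ring.
        apply Rmult_le_compat_r; lra. }
    set (mb := (Y1 b - Y2 b) ^ 2).
    assert (hmb0 : 0 <= mb) by apply pow2_ge_0.
    destruct (Req_dec mb 0) as [hz|hnz].
    { unfold mb in hz. assert (Y1 b - Y2 b = 0) by nra. lra. }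
    exfalso.
    set (Cc := 4 * M ^ 2 * exp K).
    assert (hC : 0 <= Cc) by (unfold Cc; assert (0 < exp K) by apply exp_pos; nra).
    set (u := Rmin ((b + 1) / 2) (mb / (Cc + 1))).
    assert (hu1 : u <= (b + 1) / 2) by apply Rmin_l.
    assert (hu2 : u <= mb / (Cc + 1)) by apply Rmin_r.
    assert (hu0 : 0 < u) by (apply Rmin_pos; [lra| apply Rdiv_lt_0_compat; lra]).
    specialize (step (-1 + u) ltac:(lra)).
    replace (1 + (-1 + u)) with u in step by ring. fold Cc in step.
    assert (hu3 : u * (Cc + 1) <= mb).
    { apply (Rmult_le_compat_r (Cc + 1)) in hu2; [|lra].
      replace (mb / (Cc + 1) * (Cc + 1)) with mb in hu2 by (field; lra). exact hu2. }
    assert (u ^ 2 <= u) by nra.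
    assert (Cc * u ^ 2 <= Cc * u) by (apply Rmult_le_compat_l; lra).
    fold mb in step. nra. }
  intros x hx.
  destruct (Rlt_or_le x x1) as [hlt|hge]; [apply claim; lra|].
  set (x0 := (-1 + x1) / 2).
  apply (uniq_fwd c1 c2 c3 Y1 Y2 r x0); auto; unfold x0; try lra.
  apply claim; lra.
Qed.

Lemma cont_eps (f : R -> R) x0 : continuity_pt f x0 ->
  forall e, 0 < e -> exists d, 0 < d /\ forall x, Rabs (x - x0) < d -> Rabs (f x - f x0) < e.
Proof.
  intros hc e he. destruct (hc e he) as [alp [halp H]]. exists alp. split; [lra|].
  intros x hx. destruct (Req_dec x x0) as [->|hne].
  - unfold Rminus; rewrite Rplus_opp_r, Rabs_R0; lra.
  - apply (H x). split; [split; [exact I| auto]| exact hx].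
Qed.

Lemma Wf_gt_U0 s1 s2 B x : 0 <= s1 -> 0 <= s2 -> 0 < B -> -1 < x < 1 -> U0f s1 s2 x < Wf s1 s2 B x.
Proof.
  intros. unfold Wf. assert (0 < Rfun s1 s2 B ((1 + x) / 2)) by (apply Rfun_pos; auto; lra).
  assert (0 < 2 * (1 + x) * Rfun s1 s2 B ((1 + x) / 2)) by (apply Rmult_lt_0_compat; lra).
  lra.
Qed.

Lemma Wf_rate s1 s2 B : 0 <= s1 -> 0 <= s2 -> 0 < B ->
  exists M d0, 0 <= M /\ 0 < d0 /\ forall s, -1 < s < -1 + d0 ->
    Rabs (Wf s1 s2 B s - (2 + 2 * s1)) <= M * (1 + s).
Proof.
  intros hs1 hs2 hB.
  set (A := 1 + s1 + s2). set (C := 1 + s1).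
  assert (hA : 0 <= A) by (unfold A; lra). assert (hC : 0 < C) by (unfold C; lra).
  assert (hc := PSeries_continuity (PS_derive (dseq A B C)) 0 ltac:(apply rad1; auto; lra)).
  destruct (cont_eps _ _ hc 1 ltac:(lra)) as [d1 [hd1 H1]].
  set (p0 := Psi1 A B C 0).
  assert (hp0 : 0 < p0) by (apply Psi1_pos; auto; lra).
  exists (2 + s1 + s2 + 2 * (p0 + 1)), (Rmin 1 (2 * d1)). repeat split; try lra.
  { apply Rmin_pos; lra. }
  intros s hs.
  assert (hm1 : Rmin 1 (2 * d1) <= 1) by apply Rmin_l.
  assert (hm2 : Rmin 1 (2 * d1) <= 2 * d1) by apply Rmin_r.
  set (t := (1 + s) / 2).
  assert (ht : 0 < t < 1) by (unfold t; lra).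
  assert (htd : t < d1) by (unfold t; lra).
  assert (hR := Rfun_pos s1 s2 B t hs1 hs2 hB ht).
  assert (hRle : Rfun s1 s2 B t <= p0 + 1).
  { unfold Rfun. fold A C.
    assert (h0 := Psi0_ge1 A B C t hA hB hC ltac:(lra)).
    assert (hp := Psi1_pos A B C t hA hB hC ltac:(lra)).
    assert (hq : Psi1 A B C t < p0 + 1).
    { specialize (H1 t). unfold Psi1 in *. fold p0 in H1.
      assert (Rabs (t - 0) < d1) by (rewrite Rminus_0_r, Rabs_pos_eq; lra).
      specialize (H1 H). apply Rabs_def2 in H1. destruct H1. lra. }
    apply Rle_trans with (Psi1 A B C t); [|lra].
    apply (Rmult_le_reg_r (Psi0 A B C t)); [lra|].
    replace ((1 - t) * Psi1 A B C t / Psi0 A B C t * Psi0 A B C t) with ((1 - t) * Psi1 A B C t)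
      by (field; lra).
    nra. }
  unfold Wf, U0f. fold t.
  replace ((1 + s1) * (1 - s) - (1 + s2) * (1 + s) + 2 * (1 + s) * Rfun s1 s2 B t - (2 + 2 * s1))
    with ((1 + s) * (2 * Rfun s1 s2 B t - (2 + s1 + s2))) by ring.
  rewrite Rabs_mult, Rabs_pos_eq by lra.
  rewrite Rmult_comm. apply Rmult_le_compat_r; [lra|].
  apply Rabs_le. split; lra.
Qed.

Lemma Wf_lim1 s1 s2 B : 0 <= s1 -> 0 <= s2 -> 0 < B ->
  forall e, 0 < e -> exists d, 0 < d /\ forall x, 1 - d < x < 1 ->
    Rabs (Wf s1 s2 B x - (-2 + 2 * s2)) < e.
Proof.
  intros hs1 hs2 hB e he.
  destruct (R_upper s1 s2 B (e / 8) hs1 hs2 hB ltac:(lra)) as [ta [hta Hta]].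
  destruct (R_lower s1 s2 B (e / 8) hs1 hs2 hB ltac:(lra)) as [tb [htb Htb]].
  set (t2 := Rmax ta tb).
  assert (h2a : ta <= t2) by apply Rmax_l. assert (h2b : tb <= t2) by apply Rmax_r.
  assert (h2 : t2 < 1) by (unfold t2; apply Rmax_lub_lt; lra).
  set (Q := 2 + s1 + 3 * s2 + 1).
  exists (Rmin (2 * (1 - t2)) (e / 2 / Q)). split.
  { apply Rmin_pos; [lra|]. apply Rdiv_lt_0_compat; unfold Q; lra. }
  intros x hx.
  assert (hm1 : Rmin (2 * (1 - t2)) (e / 2 / Q) <= 2 * (1 - t2)) by apply Rmin_l.
  assert (hm2 : Rmin (2 * (1 - t2)) (e / 2 / Q) <= e / 2 / Q) by apply Rmin_r.
  set (t := (1 + x) / 2).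
  assert (ht : t2 <= t < 1) by (unfold t; lra).
  specialize (Hta t ltac:(lra)). specialize (Htb t ltac:(lra)).
  assert (hQ : (1 - x) * Q < e / 2).
  { apply Rlt_le_trans with (Rmin (2 * (1 - t2)) (e / 2 / Q) * Q).
    - apply Rmult_lt_compat_r; [unfold Q; lra| lra].
    - apply Rle_trans with (e / 2 / Q * Q); [apply Rmult_le_compat_r; [unfold Q; lra|exact hm2]|].
      right. field. unfold Q; lra. }
  unfold Wf, U0f. fold t.
  replace ((1 + s1) * (1 - x) - (1 + s2) * (1 + x) + 2 * (1 + x) * Rfun s1 s2 B t - (-2 + 2 * s2))
    with ((1 - x) * (2 + s1 + s2) - 2 * s2 * (1 - x) + 2 * (1 + x) * (Rfun s1 s2 B t - s2)) by ring.
  unfold Q in hQ.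
  apply Rabs_def1.
  - assert (2 * (1 + x) * (Rfun s1 s2 B t - s2) < 4 * (e / 8)) by nra. nra.
  - assert (- (4 * (e / 8)) < 2 * (1 + x) * (Rfun s1 s2 B t - s2)) by nra. nra.
Qed.

Lemma sum_ge_term (f : nat -> R) N n : (forall k, 0 <= f k) -> (n <= N)%nat -> f n <= sum_f_R0 f N.
Proof.
  intros hf. induction N as [|N IH]; intros hn.
  - assert (n = 0%nat) by lia. subst. simpl. lra.
  - simpl. destruct (Nat.eq_dec n (S N)) as [->|hne].
    + assert (0 <= sum_f_R0 f N).
      { clear IH hn. induction N; simpl; [apply hf|]. specialize (hf (S N)). lra. }
      lra.
    + specialize (IH ltac:(lia)). specialize (hf (S N)). lra.
Qed.

Lemma radius_pos_of (a : nat -> R) y0 l : 0 < y0 -> is_pseries a y0 l -> Rbar_lt 0 (CV_radius a).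
Proof.
  intros hy hs.
  assert (hex : ex_series (fun k => a k * y0 ^ k)).
  { eapply ex_series_ext; [|exists l; exact hs]. intro n. simpl.
    rewrite pow_n_pow. change (scal (y0 ^ n) (a n)) with ((y0 ^ n) * a n). ring. }
  apply ex_series_lim_0 in hex. apply is_lim_seq_spec in hex.
  destruct (hex (mkposreal 1 Rlt_0_1)) as [N HN]. simpl in HN.
  set (M0 := sum_f_R0 (fun k => Rabs (a k * y0 ^ k)) N + 1).
  assert (hb : forall n, Rabs (a n * y0 ^ n) <= M0).
  { intro n. destruct (Compare_dec.le_lt_dec n N) as [hle|hlt].
    - unfold M0. assert (Rabs (a n * y0 ^ n) <= sum_f_R0 (fun k => Rabs (a k * y0 ^ k)) N).
      { apply (sum_ge_term (fun k => Rabs (a k * y0 ^ k))); [intro; apply Rabs_pos|exact hle]. }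
      lra.
    - specialize (HN n ltac:(lia)). rewrite Rminus_0_r in HN.
      assert (0 <= sum_f_R0 (fun k => Rabs (a k * y0 ^ k)) N).
      { apply cond_pos_sum. intro; apply Rabs_pos. }
      unfold M0. lra. }
  destruct (CV_radius_bounded a) as [hub _].
  assert (hle : Rbar_le y0 (CV_radius a)) by (apply hub; exists M0; exact hb).
  eapply Rbar_lt_le_trans; [|exact hle]. simpl. exact hy.
Qed.

Lemma series_rate (a : nat -> R) (U : R -> R) dp : 0 < dp ->
  (forall x, -1 < x < -1 + dp -> is_pseries a (x + 1) (U x)) ->
  exists M d0, 0 <= M /\ 0 < d0 /\ forall s, -1 < s < -1 + d0 -> Rabs (U s - a 0%nat) <= M * (1 + s).
Proof.
  intros hdp hser.
  assert (hs0 := hser (dp / 2 - 1) ltac:(lra)).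
  replace (dp / 2 - 1 + 1) with (dp / 2) in hs0 by ring.
  assert (hr := radius_pos_of a (dp / 2) _ ltac:(lra) hs0).
  assert (hr' : Rbar_lt (Rabs 0) (CV_radius a)) by (rewrite Rabs_R0; exact hr).
  assert (hd := is_derive_PSeries a 0 hr').
  set (l := PSeries (PS_derive a) 0) in hd.
  apply is_derive_Reals in hd.
  destruct (hd 1 Rlt_0_1) as [del hdel].
  exists (Rabs l + 1), (Rmin del dp). repeat split.
  - pose proof (Rabs_pos l); lra.
  - apply Rmin_pos; [apply cond_pos|lra].
  - intros s hs.
    assert (hm1 : Rmin del dp <= del) by apply Rmin_l.
    assert (hm2 : Rmin del dp <= dp) by apply Rmin_r.
    set (h := 1 + s).
    assert (hh : 0 < h < del) by (unfold h; lra).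
    specialize (hdel h ltac:(lra) ltac:(rewrite Rabs_pos_eq; lra)).
    rewrite Rplus_0_l, PSeries_0 in hdel.
    assert (hU : U s = PSeries a h).
    { symmetry. apply is_pseries_unique. unfold h. rewrite Rplus_comm. apply hser. lra. }
    rewrite hU.
    set (q := (PSeries a h - a 0%nat) / h) in hdel.
    assert (hq : PSeries a h - a 0%nat = q * h) by (unfold q; field; lra).
    rewrite hq, Rabs_mult, (Rabs_pos_eq h) by lra.
    apply Rmult_le_compat_r; [lra|].
    assert (Rabs q <= Rabs (q - l) + Rabs l).
    { replace q with ((q - l) + l) at 1 by ring. apply Rabs_triang. }
    lra.
Qed.

Lemma fl_left (f : R -> R) a L : (forall e, 0 < e -> exists d, 0 < d /\ forall x, a - d < x < a -> Rabs (f x - L) < e) ->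
  filterlim f (at_left a) (locally L).
Proof.
  intros H. apply filterlim_locally. intros eps.
  destruct (H eps (cond_pos eps)) as [d [hd Hd]].
  exists (mkposreal d hd). intros y hy hya. simpl in hy.
  change (Rabs (y - a) < d) in hy.
  change (Rabs (f y - L) < eps). apply Hd.
  apply Rabs_def2 in hy. lra.
Qed.

Lemma fl_right (f : R -> R) a L : (forall e, 0 < e -> exists d, 0 < d /\ forall x, a < x < a + d -> Rabs (f x - L) < e) ->
  filterlim f (at_right a) (locally L).
Proof.
  intros H. apply filterlim_locally. intros eps.
  destruct (H eps (cond_pos eps)) as [d [hd Hd]].
  exists (mkposreal d hd). intros y hy hya. simpl in hy.
  change (Rabs (y - a) < d) in hy.
  change (Rabs (f y - L) < eps). apply Hd.
  apply Rabs_def2 in hy. lra.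
Qed.

Lemma solves_restrict c1 c2 c3 Y l r l' r' : solves_on c1 c2 c3 Y l r -> l <= l' -> r' <= r ->
  solves_on c1 c2 c3 Y l' r'.
Proof. intros h h1 h2 x hx. apply h. lra. Qed.

Lemma solves_ext c1 c2 c3 Y Z l r : solves_on c1 c2 c3 Y l r -> (forall x, l < x < r -> Z x = Y x) ->
  solves_on c1 c2 c3 Z l r.
Proof.
  intros h he x hx. destruct (h x hx) as [d [hd heq]]. exists d. split.
  - apply (is_derive_ext_loc Y). 
    + assert (hp : 0 < Rmin (x - l) (r - x)) by (apply Rmin_pos; lra).
      exists (mkposreal _ hp). intros t ht. change (Rabs (t - x) < Rmin (x - l) (r - x)) in ht.
      assert (Rmin (x - l) (r - x) <= x - l) by apply Rmin_l.
      assert (Rmin (x - l) (r - x) <= r - x) by apply Rmin_r.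
      apply Rabs_def2 in ht. symmetry. apply he. lra.
    + exact hd.
  - rewrite he by exact hx. exact heq.
Qed.

Lemma solves_mirror c1 c2 c3 (U : R -> R) l r : solves_on c1 c2 c3 U l r ->
  solves_on c2 c1 c3 (fun y => - U (- y)) (- r) (- l).
Proof.
  intros h y hy. destruct (h (- y) ltac:(lra)) as [d [hd he]].
  exists d. split.
  - assert (hd' : is_derive (fun y => - U (- y)) y d).
    { auto_derive. eexists; exact hd.
      replace (Derive (fun x : R => U x) (- y)) with d by (symmetry; apply is_derive_unique; exact hd).
      ring. }
    exact hd'.
  - unfold Pc in *. replace ((- y) ^ 2) with (y ^ 2) in he by ring.
    replace ((- U (- y)) ^ 2) with ((U (- y)) ^ 2) by ring. lra.
Qed.

Lemma c3bar_sym c1 c2 : c3bar c2 c1 = c3bar c1 c2.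
Proof. unfold c3bar. ring. Qed.

Lemma half c1 c2 c3 (Up : R -> R) dp (a : nat -> R) : -1 <= c1 -> -1 <= c2 -> c3bar c1 c2 < c3 ->
  0 < dp -> a 0%nat = tau2 c1 ->
  (forall x, -1 < x < -1 + dp -> is_pseries a (x + 1) (Up x)) ->
  solves_on c1 c2 c3 Up (-1) (-1 + dp) ->
  (forall x, -1 < x < 1 -> x < -1 + dp -> Wsol c1 c2 c3 x = Up x) /\
  (forall Y, solves_on c1 c2 c3 Y (-1) 1 -> (forall x, -1 < x < -1 + dp -> Y x = Up x) ->
     forall x, -1 < x < 1 -> Y x = Wsol c1 c2 c3 x).
Proof.
  intros h1 h2 h3 hdp ha0 hser hsol.
  set (s1 := sqrt (1 + c1)). set (s2 := sqrt (1 + c2)). set (B := Bof c1 c2 c3).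
  assert (hs1 : 0 <= s1) by apply sqrt_pos. assert (hs2 : 0 <= s2) by apply sqrt_pos.
  assert (hB : 0 < B) by (unfold B, Bof; lra).
  assert (hW := Wsol_solves c1 c2 c3 h1 h2 h3).
  set (r := Rmin (-1 + dp) 1).
  assert (hr1 : r <= -1 + dp) by apply Rmin_l. assert (hr2 : r <= 1) by apply Rmin_r.
  assert (hr3 : -1 < r) by (apply Rmin_glb_lt; lra).
  assert (P1 : forall x, -1 < x < r -> Wsol c1 c2 c3 x = Up x).
  { destruct (Wf_rate s1 s2 B hs1 hs2 hB) as [Mw [dw [hMw [hdw Hw]]]].
    destruct (series_rate a Up dp hdp hser) as [Mu [du [hMu [hdu Hu]]]].
    apply (uniq_m1 c1 c2 c3 _ _ r (2 + 2 * s1) (Rmax Mw Mu) (Rmin dw du)); auto.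
    - lra.
    - apply Rle_trans with Mw; [lra|apply Rmax_l].
    - apply Rmin_pos; lra.
    - eapply solves_restrict; [exact hW| lra| lra].
    - eapply solves_restrict; [exact hsol| lra| lra].
    - intros s hs.
      assert (Rmin dw du <= dw) by apply Rmin_l. assert (Rmin dw du <= du) by apply Rmin_r.
      assert (Mw <= Rmax Mw Mu) by apply Rmax_l. assert (Mu <= Rmax Mw Mu) by apply Rmax_r.
      split.
      + unfold Wsol. fold s1 s2 B. eapply Rle_trans; [apply Hw; lra|].
        apply Rmult_le_compat_r; lra.
      + rewrite ha0 in Hu. unfold tau2 in Hu. fold s1 in Hu.
        eapply Rle_trans; [apply Hu; lra|]. apply Rmult_le_compat_r; lra. }
  split.
  - intros x hx hx'. apply P1. split; [lra|]. unfold r. apply Rmin_glb_lt; lra.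
  - intros Y hY hYe x hx.
    set (x0 := (-1 + r) / 2).
    assert (hx0 : Y x0 = Wsol c1 c2 c3 x0).
    { rewrite hYe by (unfold x0; lra). rewrite P1 by (unfold x0; lra). reflexivity. }
    destruct (Rlt_or_le x x0) as [hlt|hge].
    + rewrite hYe by (unfold x0 in hlt; lra). rewrite P1 by (unfold x0 in hlt; lra). reflexivity.
    + apply (uniq_fwd c1 c2 c3 Y (Wsol c1 c2 c3) 1 x0); auto; try lra.
      unfold x0; lra.
Qed.
Theorem lemma2p7 (c1 c2 c3 : R) (hc1 : -1 <= c1) (hc2 : -1 <= c2)
  (hc3 : c3bar c1 c2 < c3)
  (Up : R -> R) (dp : R) (a : nat -> R)
  (hdp : 0 < dp) (ha0 : a 0%nat = tau2 c1)
  (hUp_ser : forall x, -1 < x < -1 + dp -> is_pseries a (x + 1) (Up x))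
  (hUp_sol : solves_on c1 c2 c3 Up (-1) (-1 + dp))
  (Um : R -> R) (dm : R) (b : nat -> R)
  (hdm : 0 < dm) (hb0 : b 0%nat = tau1' c2)
  (hUm_ser : forall x, 1 - dm < x < 1 -> is_pseries b (1 - x) (Um x))
  (hUm_sol : solves_on c1 c2 c3 Um (1 - dm) 1) :
  (* U^+ and U^- extend to solutions on (-1,1) *)
  (exists Vp : R -> R, solves_on c1 c2 c3 Vp (-1) 1 /\
     forall x, -1 < x < -1 + dp -> Vp x = Up x) /\
  (exists Vm : R -> R, solves_on c1 c2 c3 Vm (-1) 1 /\
     forall x, 1 - dm < x < 1 -> Vm x = Um x) /\
  (* any such extensions have the stated boundary values and are ordered *)
  (forall Vp Vm : R -> R,
     solves_on c1 c2 c3 Vp (-1) 1 ->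
     (forall x, -1 < x < -1 + dp -> Vp x = Up x) ->
     solves_on c1 c2 c3 Vm (-1) 1 ->
     (forall x, 1 - dm < x < 1 -> Vm x = Um x) ->
     filterlim Vp (at_left 1) (locally (tau2' c2)) /\
     filterlim Vm (at_right (-1)) (locally (tau1 c1)) /\
     (forall x, -1 < x < 1 -> Vm x < Vp x)).
Proof.
  set (s1 := sqrt (1 + c1)). set (s2 := sqrt (1 + c2)).
  assert (hs1 : 0 <= s1) by apply sqrt_pos. assert (hs2 : 0 <= s2) by apply sqrt_pos.
  set (W := Wsol c1 c2 c3).
  destruct (half c1 c2 c3 Up dp a hc1 hc2 hc3 hdp ha0 hUp_ser hUp_sol) as [HP1 HP2].
  set (Ut := fun y => - Um (- y)).
  set (bt := fun n => - b n).
  assert (hc3' : c3bar c2 c1 < c3) by (rewrite c3bar_sym; exact hc3).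
  assert (hbt0 : bt 0%nat = tau2 c2) by (unfold bt; rewrite hb0; unfold tau1', tau2; ring).
  assert (hUt_ser : forall x, -1 < x < -1 + dm -> is_pseries bt (x + 1) (Ut x)).
  { intros x hx. assert (h := hUm_ser (- x) ltac:(lra)).
    replace (1 - - x) with (x + 1) in h by ring.
    apply is_pseries_opp in h. eapply is_pseries_ext; [|exact h].
    intro n. reflexivity. }
  assert (hUt_sol : solves_on c2 c1 c3 Ut (-1) (-1 + dm)).
  { assert (h := solves_mirror c1 c2 c3 Um (1 - dm) 1 hUm_sol).
    replace (- (1 - dm)) with (-1 + dm) in h by ring. exact h. }
  destruct (half c2 c1 c3 Ut dm bt hc2 hc1 hc3' hdm hbt0 hUt_ser hUt_sol) as [HM1 HM2].
  set (Wt := Wsol c2 c1 c3).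
  assert (hWs : solves_on c1 c2 c3 W (-1) 1) by (apply Wsol_solves; auto).
  assert (hWts : solves_on c1 c2 c3 (fun x => - Wt (- x)) (-1) 1).
  { assert (h := solves_mirror c2 c1 c3 Wt (-1) 1 (Wsol_solves c2 c1 c3 hc2 hc1 hc3')).
    replace (- (-1)) with 1 in h by ring. replace (- 1) with (-1) in h by ring. exact h. }
  assert (hB : 0 < Bof c1 c2 c3) by (unfold Bof; lra).
  assert (hB' : 0 < Bof c2 c1 c3) by (unfold Bof; lra).
  assert (UP : forall Vp, solves_on c1 c2 c3 Vp (-1) 1 -> (forall x, -1 < x < -1 + dp -> Vp x = Up x) ->
     forall x, -1 < x < 1 -> Vp x = W x).
  { intros Vp h1 h2. apply HP2; auto. }
  assert (UM : forall Vm, solves_on c1 c2 c3 Vm (-1) 1 -> (forall x, 1 - dm < x < 1 -> Vm x = Um x) ->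
     forall x, -1 < x < 1 -> Vm x = - Wt (- x)).
  { intros Vm h1 h2 x hx.
    assert (h := HM2 (fun y => - Vm (- y))).
    assert (h1' := solves_mirror c1 c2 c3 Vm (-1) 1 h1).
    replace (- (-1)) with 1 in h1' by ring. replace (- 1) with (-1) in h1' by ring.
    specialize (h h1').
    assert (h2' : forall y, -1 < y < -1 + dm -> - Vm (- y) = Ut y).
    { intros y hy. unfold Ut. rewrite h2 by lra. reflexivity. }
    specialize (h h2' (- x) ltac:(lra)). cbv beta in h. rewrite Ropp_involutive in h. fold Wt in h. lra. }
  split; [|split].
  - exists (fun x => if Rlt_dec x 1 then W x else Up x). split.
    + apply (solves_ext c1 c2 c3 W); auto.
      intros x hx. destruct (Rlt_dec x 1); [reflexivity|lra].
    + intros x hx. destruct (Rlt_dec x 1) as [h|h]; [|reflexivity].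
      apply HP1; lra.
  - exists (fun x => if Rlt_dec (-1) x then - Wt (- x) else Um x). split.
    + apply (solves_ext c1 c2 c3 (fun x => - Wt (- x))); auto.
      intros x hx. destruct (Rlt_dec (-1) x); [reflexivity|lra].
    + intros x hx. destruct (Rlt_dec (-1) x) as [h|h]; [|reflexivity].
      assert (e := HM1 (- x) ltac:(lra) ltac:(lra)). fold Wt in e. rewrite e.
      unfold Ut. rewrite !Ropp_involutive. reflexivity.
  - intros Vp Vm hVp hVpe hVm hVme.
    split; [|split].
    + apply fl_left. intros e he.
      destruct (Wf_lim1 s1 s2 (Bof c1 c2 c3) hs1 hs2 hB e he) as [d [hd Hd]].
      exists (Rmin d 2). split; [apply Rmin_pos; lra|].
      intros x hx. assert (Rmin d 2 <= d) by apply Rmin_l. assert (Rmin d 2 <= 2) by apply Rmin_r.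
      rewrite (UP Vp hVp hVpe x) by lra.
      unfold tau2'. fold s2. unfold W, Wsol. fold s1 s2. apply Hd. lra.
    + apply fl_right. intros e he.
      destruct (Wf_lim1 s2 s1 (Bof c2 c1 c3) hs2 hs1 hB' e he) as [d [hd Hd]].
      exists (Rmin d 2). split; [apply Rmin_pos; lra|].
      intros x hx. assert (Rmin d 2 <= d) by apply Rmin_l. assert (Rmin d 2 <= 2) by apply Rmin_r.
      rewrite (UM Vm hVm hVme x) by lra.
      unfold tau1. fold s1. unfold Wt, Wsol. fold s1 s2.
      specialize (Hd (- x) ltac:(lra)).
      replace (- Wf s2 s1 (Bof c2 c1 c3) (- x) - (2 - 2 * s1))
        with (- (Wf s2 s1 (Bof c2 c1 c3) (- x) - (-2 + 2 * s1))) by ring.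
      rewrite Rabs_Ropp. exact Hd.
    + intros x hx.
      rewrite (UP Vp hVp hVpe x hx), (UM Vm hVm hVme x hx).
      assert (h1 := Wf_gt_U0 s1 s2 (Bof c1 c2 c3) x hs1 hs2 hB hx).
      assert (h2 := Wf_gt_U0 s2 s1 (Bof c2 c1 c3) (- x) hs2 hs1 hB' ltac:(lra)).
      unfold W, Wt, Wsol. fold s1 s2. unfold U0f in *. lra.
Qed.
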